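(* For all (possibly partial) Boolean functions $f$ and $g$, $\lambda(f\circ g)=\lambda(f)\lambda(g)$.
   Context: For a partial function $h$ with domain $\mathrm{Dom}(h)\subseteq\{0,1\}^k$, the sensitivity graph $G_h$ has vertex set $\mathrm{Dom}(h)$ and an edge between $x,y$ iff they differ in exactly one coordinate and $h(x)\ne h(y)$; $\lambda(h)$ is the spectral norm of its adjacency matrix. If $f$ has $n$ input bits and $g$ has $m$, then $f\circ g$ is the partial function on $\{0,1\}^{nm}$, with input written $x=x^{(1)}\cdots x^{(n)}$, $x^{(i)}\in\{0,1\}^m$, defined on those $x$ with each $x^{(i)}\in\mathrm{Dom}(g)$ and $(g(x^{(1)}),\dots,g(x^{(n)}))\in\mathrm{Dom}(f)$, by $(f\circ g)(x)=f(g(x^{(1)}),\dots,g(x^{(n)}))$. *)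

(* Defs.v *)
From HB Require Import structures.
From mathcomp Require Import all_boot all_order all_algebra.
From mathcomp Require Import boolp classical_sets reals.
Set Implicit Arguments. Unset Strict Implicit. Unset Printing Implicit Defensive.
Import Order.TTheory GRing.Theory Num.Theory.
Local Open Scope ring_scope.
Local Open Scope classical_set_scope.

Definition bits (k : nat) := {ffun 'I_k -> bool}.

(* A partial Boolean function on k bits: None = outside Dom(h). *)
Definition pfun (k : nat) := bits k -> option bool.

Definition dom (k : nat) (h : pfun k) : pred (bits k) := fun x => h x != None.

Definition domT (k : nat) (h : pfun k) := {x : bits k | dom h x}.

Definition hamming1 (k : nat) (x y : bits k) : bool :=
  #|[set i | x i != y i]| == 1%N.

(* Adjacency matrix of the sensitivity graph G_h, indexed by Dom(h). *)
Definition sens_adj (R : realType) (k : nat) (h : pfun k)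
  (x y : domT h) : R :=
  if hamming1 (val x) (val y) && (h (val x) != h (val y)) then 1 else 0.

Definition spectral_norm (R : realType) (V : finType) (A : V -> V -> R) : R :=
  sup [set r : R | exists v : V -> R,
        (\sum_(i : V) v i ^+ 2 <= 1) /\
        r = Num.sqrt (\sum_(i : V) (\sum_(j : V) A i j * v j) ^+ 2)].

Definition lambda (R : realType) (k : nat) (h : pfun k) : R :=
  spectral_norm (@sens_adj R k h).

(* Block i of an input x of length n*m: x^(i)_j = x_{i*m + j}. *)
Definition block (n m : nat) (x : bits (n * m)) (i : 'I_n) : bits m :=
  [ffun j : 'I_m => x (mxvec_index i j)].

(* Composition f o g, defined exactly when every block is in Dom(g) and the
   vector of g-values is in Dom(f). *)
Definition compose (n m : nat) (f : pfun n) (g : pfun m) : pfun (n * m) :=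
  fun x =>
    let ys := [ffun i : 'I_n => g (block x i)] in
    if [forall i, ys i != None]
    then f [ffun i => odflt false (ys i)]
    else None.

(* Main.v *)
Require Import Defs.
From HB Require Import structures.
From mathcomp Require Import all_boot all_order all_algebra.
From mathcomp Require Import boolp classical_sets reals.
From mathcomp Require Import ring lra.
Set Implicit Arguments. Unset Strict Implicit. Unset Printing Implicit Defensive.
Import Order.TTheory GRing.Theory Num.Theory.
Local Open Scope ring_scope.

Section Gen.
Local Open Scope classical_set_scope.
Variable R : realType.
Variable V : finType.
Implicit Types u v w : V -> R.

Definition ss v : R := \sum_i v i ^+ 2.
Definition nrm v : R := Num.sqrt (ss v).

Lemma ss_ge0 v : 0 <= ss v.
Proof. by apply: sumr_ge0 => i _; rewrite sqr_ge0. Qed.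

Lemma nrm_ge0 v : 0 <= nrm v.
Proof. exact: sqrtr_ge0. Qed.

Lemma dsum_prod (a b : V -> R) : \sum_i \sum_j a i * b j = (\sum_i a i) * (\sum_j b j).
Proof. by rewrite big_distrl; apply: eq_bigr => i _; rewrite big_distrr. Qed.

Lemma CS2 u v : (\sum_i u i * v i) ^+ 2 <= ss u * ss v.
Proof.
have H : 0 <= \sum_i \sum_j (u i * v j - u j * v i) ^+ 2.
  by apply: sumr_ge0 => i _; apply: sumr_ge0 => j _; rewrite sqr_ge0.
have E : \sum_i \sum_j (u i * v j - u j * v i) ^+ 2 =
   \sum_i \sum_j (u i ^+ 2 * v j ^+ 2) + \sum_i \sum_j (u j ^+ 2 * v i ^+ 2)
   - (\sum_i \sum_j (u i * v i) * (u j * v j)) *+ 2.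
  rewrite -big_split -sumrMnl -sumrB /=; apply: eq_bigr => i _.
  rewrite -big_split -sumrMnl -sumrB /=; apply: eq_bigr => j _; ring.
move: H; rewrite E (exchange_big _ _ _ _ _ (fun i j => u j ^+ 2 * v i ^+ 2)) /=.
rewrite !dsum_prod -expr2 -/(ss u) -/(ss v) subr_ge0.
rewrite -mulr2n lerMn2r. by [].
Qed.

Lemma CS u v : \sum_i u i * v i <= nrm u * nrm v.
Proof.
rewrite /nrm -sqrtrM ?ss_ge0 //.
apply: le_trans (ler_norm _) _.
by rewrite -sqrtr_sqr ler_sqrt ?CS2 // mulr_ge0 ?ss_ge0.
Qed.


Lemma nrmZ a v : nrm (fun i => a * v i) = `|a| * nrm v.
Proof.
rewrite /nrm /ss -sqrtr_sqr -sqrtrM ?sqr_ge0 // big_distrr /=.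
by congr Num.sqrt; apply: eq_bigr => i _; rewrite exprMn.
Qed.

Lemma ss_eq0 v : ss v = 0 -> forall i, v i = 0.
Proof.
move=> H i; have := @psumr_eq0P _ _ xpredT _ (fun i _ => sqr_ge0 (v i)) H i isT.
by move/eqP; rewrite sqrf_eq0 => /eqP.
Qed.

Lemma nrm_eq0 v : nrm v = 0 -> forall i, v i = 0.
Proof.
move=> H; apply: ss_eq0; apply/eqP; rewrite eq_le ss_ge0 andbT -sqrtr_eq0.
by rewrite -/(nrm v) H.
Qed.

Variable A : V -> V -> R.
Definition app v : V -> R := fun i => \sum_j A i j * v j.
Definition bil w v : R := \sum_i w i * app v i.

Definition SN := [set r : R | exists v : V -> R,
        (\sum_(i : V) v i ^+ 2 <= 1) /\
        r = Num.sqrt (\sum_(i : V) (\sum_(j : V) A i j * v j) ^+ 2)].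

Lemma SN0 : SN 0.
Proof.
exists (fun _ => 0); split; first by rewrite big1 // => i _; rewrite expr0n.
rewrite big1 ?sqrtr0 // => i _; rewrite big1 ?expr0n // => j _; by rewrite mulr0.
Qed.

Lemma SN_has_sup : has_sup SN.
Proof.
split; first by exists 0; exact: SN0.
exists (Num.sqrt (\sum_i ss (A i))) => r [v [Hv ->]].
rewrite ler_sqrt; last by apply: sumr_ge0 => i _; exact: ss_ge0.
apply: ler_sum => i _; apply: le_trans (CS2 (A i) v) _.
rewrite -[leRHS]mulr1 ler_wpM2l //; exact: ss_ge0.
Qed.

Lemma SN_elt v : ss v <= 1 -> nrm (app v) <= sup SN.
Proof. by move=> Hv; apply: (sup_upper_bound SN_has_sup); exists v. Qed.

Lemma SN_ge0 : 0 <= sup SN.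
Proof. exact: (sup_upper_bound SN_has_sup) SN0. Qed.

Lemma app_lin a v : app (fun j => a * v j) = (fun i => a * app v i).
Proof.
apply: funext => i; rewrite /app big_distrr /=; apply: eq_bigr => j _.
by rewrite mulrCA.
Qed.

Lemma SN_app v : nrm (app v) <= sup SN * nrm v.
Proof.
have [H0|Hp] := eqVneq (nrm v) 0.
  have Hv := nrm_eq0 H0.
  rewrite H0 mulr0 /app.
  rewrite (_ : (fun i => _) = (fun i => 0 * 0)); last first.
    by apply: funext => i; rewrite big1 ?mulr0 // => j _; rewrite Hv mulr0.
  by rewrite nrmZ normr0 mul0r.
have Hp' : 0 < nrm v by rewrite lt_def Hp nrm_ge0.
pose v' := fun j => (nrm v)^-1 * v j.
have Hs : ss v' <= 1.
  rewrite -ler_sqrt ?ler01 // sqrtr1 -/(nrm v') /v' nrmZ ger0_norm.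
    by rewrite mulVf.
  by rewrite invr_ge0 nrm_ge0.
have := SN_elt Hs; rewrite /v' app_lin nrmZ ger0_norm ?invr_ge0 ?nrm_ge0 //.
by rewrite mulrC -ler_pdivlMr ?invr_gt0 // invrK.
Qed.

Lemma bil_low w v : bil w v <= sup SN * nrm w * nrm v.
Proof.
apply: le_trans (CS _ _) _; rewrite -mulrA mulrCA ler_wpM2l ?nrm_ge0 //.
exact: SN_app.
Qed.

Lemma bil_up c : 0 <= c -> (forall w v, bil w v <= c * nrm w * nrm v) ->
  sup SN <= c.
Proof.
move=> c0 H; apply: ge_sup; first by exists 0; exact: SN0.
move=> r [v [Hv ->]]; rewrite -/(ss v) in Hv.
have -> : Num.sqrt (\sum_i (\sum_j A i j * v j) ^+ 2) = nrm (app v) by [].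
have Hv' : nrm v <= 1 by rewrite -sqrtr1 ler_sqrt.
have E : bil (app v) v = nrm (app v) ^+ 2.
  by rewrite sqr_sqrtr ?ss_ge0 // /ss /bil; apply: eq_bigr => i _; rewrite expr2.
have H1 := H (app v) v; rewrite E in H1.
have {}H1 : nrm (app v) ^+ 2 <= c * nrm (app v).
  apply: le_trans H1 _; rewrite -[leRHS]mulr1 ler_wpM2l // mulr_ge0 // nrm_ge0 //.
have [H0|Hp] := eqVneq (nrm (app v)) 0; first by rewrite H0.
have Hp' : 0 < nrm (app v) by rewrite lt_def Hp nrm_ge0.
by move: H1; rewrite expr2 ler_pM2r.
Qed.
End Gen.

Section Full.
Variable R : realType.

Lemma sum_domT (k : nat) (h : pfun k) (F : bits k -> R) :
  (forall x, ~~ dom h x -> F x = 0) ->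
  \sum_x F x = \sum_(x : domT h) F (val x).
Proof.
move=> H; rewrite (bigID (dom h)) /= [X in _ + X]big1 ?addr0; last first.
  by move=> x /H.
exact: big_sub.
Qed.

Definition Ahat (k : nat) (h : pfun k) (x y : bits k) : R :=
  if dom h x && dom h y && hamming1 x y && (h x != h y) then 1 else 0.

Definition ext (k : nat) (h : pfun k) (w : domT h -> R) (x : bits k) : R :=
  if insub x is Some y then w y else 0.

Lemma ext_val k (h : pfun k) (w : domT h -> R) (y : domT h) : ext w (val y) = w y.
Proof. by rewrite /ext valK. Qed.

Lemma ext_out k (h : pfun k) (w : domT h -> R) x : ~~ dom h x -> ext w x = 0.
Proof. by move=> H; rewrite /ext insubF //; apply/negbTE. Qed.

Lemma bil_res k (h : pfun k) (W U : bits k -> R) :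
  bil (Ahat h) W U = bil (@sens_adj R k h) (fun y => W (val y)) (fun y => U (val y)).
Proof.
rewrite /bil (@sum_domT k h); last first.
  move=> x Hx; rewrite /app big1 ?mulr0 // => y _; by rewrite /Ahat (negbTE Hx) mul0r.
apply: eq_bigr => x _; congr (_ * _); rewrite /app (@sum_domT k h); last first.
  move=> y Hy; by rewrite /Ahat (negbTE Hy) andbF mul0r.
apply: eq_bigr => y _; congr (_ * _).
by rewrite /Ahat /sens_adj (valP x) (valP y).
Qed.

Lemma ss_res k (h : pfun k) (W : bits k -> R) :
  ss (fun y : domT h => W (val y)) <= ss W.
Proof.
rewrite /ss [leRHS](bigID (dom h)) /=.
rewrite (big_sub (dom h) (fun x => W x ^+ 2)) lerDl.
by apply: sumr_ge0 => i _; rewrite sqr_ge0.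
Qed.

Lemma nrm_res k (h : pfun k) (W : bits k -> R) :
  nrm (fun y : domT h => W (val y)) <= nrm W.
Proof. by rewrite ler_sqrt ?ss_ge0 ?ss_res. Qed.

Lemma ss_ext k (h : pfun k) (w : domT h -> R) : ss (ext w) = ss w.
Proof.
rewrite /ss (@sum_domT k h); last by move=> x Hx; rewrite ext_out // expr0n.
by apply: eq_bigr => y _; rewrite ext_val.
Qed.

Lemma lam_low k (h : pfun k) (W U : bits k -> R) :
  bil (Ahat h) W U <= lambda R h * nrm W * nrm U.
Proof.
rewrite bil_res; apply: le_trans (bil_low _ _ _) _.
have H0 : 0 <= lambda R h by apply: SN_ge0.
rewrite -!mulrA ler_wpM2l //; apply: ler_pM; rewrite ?nrm_ge0 ?nrm_res //.
Qed.

Lemma lam_up k (h : pfun k) c : 0 <= c ->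
  (forall W U : bits k -> R, bil (Ahat h) W U <= c * nrm W * nrm U) ->
  lambda R h <= c.
Proof.
move=> c0 H; apply: bil_up => // w v.
have := H (ext w) (ext v); rewrite bil_res /nrm !ss_ext.
have E : forall u : domT h -> R, (fun y : domT h => ext u (val y)) = u.
  by move=> u; apply: funext => y; rewrite ext_val.
by rewrite !E.
Qed.
End Full.

Section Idx.
Variables n m : nat.
Notation BB := {ffun 'I_n -> bits m}.

Definition unidx (k : 'I_(n * m)) : 'I_n * 'I_m :=
  enum_val (cast_ord (esym (mxvec_cast n m)) k).

Lemma unidxK i j : unidx (mxvec_index i j) = (i, j).
Proof. by rewrite /unidx /mxvec_index cast_ordK enum_rankK. Qed.

Lemma mxvec_index_inj i j i' j' : mxvec_index i j = mxvec_index i' j' :> 'I_(n * m) ->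
  (i = i') /\ (j = j').
Proof. by move=> /(congr1 unidx); rewrite !unidxK => -[-> ->]. Qed.

Definition fromB (X : BB) : bits (n * m) := [ffun k => X (unidx k).1 (unidx k).2].
Definition toB (x : bits (n * m)) : BB := [ffun i => block x i].

Lemma fromB_idx X i j : fromB X (mxvec_index i j) = X i j.
Proof. by rewrite ffunE unidxK. Qed.

Lemma blockB X i : block (fromB X) i = X i.
Proof. by apply/ffunP => j; rewrite ffunE fromB_idx. Qed.

Lemma toBK : cancel toB fromB.
Proof.
move=> x; apply/ffunP => k; case/mxvec_indexP: k => i j.
by rewrite fromB_idx ffunE ffunE.
Qed.

Lemma fromBK : cancel fromB toB.
Proof. by move=> X; apply/ffunP => i; rewrite ffunE blockB. Qed.

Lemma sumB (R : realType) (F : bits (n * m) -> R) : \sum_x F x = \sum_X F (fromB X).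
Proof.
by rewrite (reindex fromB) //; exists toB => x _; [rewrite fromBK | rewrite toBK].
Qed.

Definition agree (i : 'I_n) (X Y : BB) := [forall k, (k != i) ==> (X k == Y k)].

Lemma ham_fin k (x y : bits k) :
  hamming1 x y = (#|[set i | x i != y i]| == 1)%N.
Proof.
rewrite /hamming1; congr (_ == _); apply: eq_card => i.
apply/idP/idP => H.
  by move: H; rewrite in_setE inE.
by rewrite in_setE; move: H; rewrite inE.
Qed.

Lemma neq_ffun (T : finType) (a b : {ffun T -> bool}) : a != b -> exists j, a j != b j.
Proof.
move=> H; apply/existsP; apply: contraR H; rewrite negb_exists => /forallP H.
by apply/eqP/ffunP => j; move: (H j); rewrite negbK => /eqP.
Qed.

Lemma HB (X Y : BB) (i : 'I_n) : X i != Y i ->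
  hamming1 (fromB X) (fromB Y) = agree i X Y && hamming1 (X i) (Y i).
Proof.
move=> Hi; rewrite !ham_fin.
case Ha: (agree i X Y) => /=.
  have -> : [set k | fromB X k != fromB Y k] =
      mxvec_index i @: [set j | X i j != Y i j].
    apply/setP => k; case/mxvec_indexP: k => k j; rewrite inE !fromB_idx.
    have [->|Hk] := eqVneq k i.
      apply/idP/imsetP => [H|[j' ]]; first by exists j; rewrite ?inE.
      by rewrite inE => Hj /mxvec_index_inj [_ ->].
    move/forallP: Ha => /(_ k); rewrite Hk /= => /eqP ->; rewrite eqxx /=.
    apply/esym/negbTE/imsetP => -[j' _] /mxvec_index_inj [E _].
    by rewrite E eqxx in Hk.
  rewrite card_imset //; move=> j1 j2 /mxvec_index_inj [_ ->] //.
move/negbT: Ha; rewrite /agree negb_forall => /existsP [k0].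
rewrite negb_imply => /andP [Hk0 Hx].
have [j0 Hj0] := neq_ffun Hx.
have [j1 Hj1] := neq_ffun Hi.
apply/negbTE; rewrite neq_ltn; apply/orP; right.
apply: (@leq_trans #|[set mxvec_index k0 j0; mxvec_index i j1]|).
  rewrite cards2; case: eqP => // /mxvec_index_inj [E _].
  by rewrite E eqxx in Hk0.
apply: subset_leq_card; apply/fintype.subsetP => k; rewrite !inE.
case/ssrbool.orP => /eqP ->; rewrite !fromB_idx; [exact: Hj0|exact: Hj1].
Qed.
End Idx.

Section Comp.
Variable R : realType.
Variables (n m : nat) (f : pfun n) (g : pfun m).
Notation BB := {ffun 'I_n -> bits m}.

Definition FB (z : bits n) (X : BB) := [forall i, g (X i) == Some (z i)].
Definition alldef (X : BB) := [forall i, g (X i) != None].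
Definition zof (X : BB) : bits n := [ffun i => odflt false (g (X i))].

Lemma FB_alldef z X : FB z X = alldef X && (z == zof X).
Proof.
apply/idP/idP.
  move/forallP => H; apply/andP; split.
    by apply/forallP => i; rewrite (eqP (H i)).
  by apply/eqP/ffunP => i; rewrite ffunE (eqP (H i)).
case/andP => /forallP H /eqP ->; apply/forallP => i; rewrite ffunE.
by move: (H i); case: (g (X i)).
Qed.

Lemma compB X : compose f g (fromB X) = if alldef X then f (zof X) else None.
Proof.
rewrite /compose.
have -> : [forall i, [ffun i0 => g (block (fromB X) i0)] i != None] = alldef X.
  by apply: eq_forallb => i; rewrite ffunE blockB.
case: (alldef X) => //; congr f; apply/ffunP => i; by rewrite !ffunE blockB.
Qed.

Lemma ham_agree (X Y : BB) : hamming1 (fromB X) (fromB Y) ->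
  exists i, X i != Y i /\ agree i X Y.
Proof.
move=> H; have H' := H; rewrite ham_fin in H'.
have /card_gt0P [k] : (0 < #|[set k | fromB X k != fromB Y k]|)%N by rewrite (eqP H').
rewrite inE; case/mxvec_indexP: k => i j; rewrite !fromB_idx => Hij.
have Hi : X i != Y i by apply: contraNneq Hij => ->.
by exists i; split => //; move: H; rewrite (HB Hi) => /andP[].
Qed.

Lemma Ahat_comp (X Y : BB) : alldef X -> alldef Y ->
  Ahat R (compose f g) (fromB X) (fromB Y) =
  Ahat R f (zof X) (zof Y) * (hamming1 (fromB X) (fromB Y))%:R.
Proof.
move=> HX HY; rewrite /Ahat /dom !compB HX HY.
case Hh: (hamming1 (fromB X) (fromB Y)); last by rewrite !andbF /= mulr0.
rewrite mulr1 /=.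
case Hf: (f (zof X) != f (zof Y)); last by rewrite !andbF.
rewrite !andbT.
suff -> : hamming1 (zof X) (zof Y) by rewrite andbT.
have [i [Hi Ha]] := ham_agree Hh.
have Hne : zof X != zof Y by apply: contraNneq Hf => ->.
rewrite ham_fin; apply/eqP.
have -> : [set k | zof X k != zof Y k] = [set i]; last by rewrite cards1.
apply/setP => k; rewrite !inE.
have [->|Hk] := eqVneq k i.
  apply: contraNneq Hne => E; apply/eqP/ffunP => k'.
  have [->|Hk'] := eqVneq k' i; first by [].
  by move/forallP: Ha => /(_ k'); rewrite Hk' /= => /eqP; rewrite !ffunE => ->.
by move/forallP: Ha => /(_ k); rewrite Hk /= => /eqP; rewrite !ffunE => ->; rewrite eqxx.
Qed.

Lemma sum_ind (T : finType) (a : T) (G : T -> R) :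
  \sum_z (z == a)%:R * G z = G a.
Proof.
rewrite (bigD1 a) //= eqxx mul1r big1 ?addr0 // => z /negbTE ->.
by rewrite mul0r.
Qed.

Lemma sum4 (A B C D : finType) (F : A -> B -> C -> D -> R) :
  \sum_a \sum_b \sum_c \sum_d F a b c d = \sum_c \sum_d \sum_a \sum_b F a b c d.
Proof.
transitivity (\sum_a \sum_c \sum_d \sum_b F a b c d).
  apply: eq_bigr => a _; rewrite exchange_big /=; apply: eq_bigr => c _.
  by rewrite exchange_big.
rewrite exchange_big /=; apply: eq_bigr => c _; by rewrite exchange_big.
Qed.

Lemma U1 (X Y : BB) :
  Ahat R (compose f g) (fromB X) (fromB Y) =
  \sum_z \sum_z' (FB z X)%:R * (FB z' Y)%:R * Ahat R f z z' *
     (hamming1 (fromB X) (fromB Y))%:R.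
Proof.
case HX: (alldef X); last first.
  rewrite /Ahat /dom compB HX /= big1 // => z _; rewrite big1 // => z' _.
  by rewrite FB_alldef HX /= !mul0r.
case HY: (alldef Y); last first.
  rewrite /Ahat /dom !compB HY /= andbF /= big1 // => z _.
  by rewrite big1 // => z' _; rewrite (FB_alldef z' Y) HY /= mulr0 !mul0r.
rewrite Ahat_comp //.
under eq_bigr => z _ do under eq_bigr => z' _ do
  rewrite FB_alldef HX FB_alldef HY /= -!mulrA.
transitivity (\sum_z (z == zof X)%:R * \sum_z' (z' == zof Y)%:R *
   (Ahat R f z z' * (hamming1 (fromB X) (fromB Y))%:R)).
  by rewrite sum_ind sum_ind.
by apply: eq_bigr => z _; rewrite big_distrr.
Qed.
End Comp.

Section Upd.
Variable R : realType.
Variables (n m : nat).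
Notation BB := {ffun 'I_n -> bits m}.

Definition upd (X : BB) (i : 'I_n) (y : bits m) : BB :=
  [ffun k => if k == i then y else X k].

Lemma upd_same X i y : upd X i y i = y.
Proof. by rewrite ffunE eqxx. Qed.

Lemma upd_other X i y k : k != i -> upd X i y k = X k.
Proof. by rewrite ffunE => /negbTE ->. Qed.

Lemma upd_upd X i x y : upd (upd X i x) i y = upd X i y.
Proof. by apply/ffunP => k; rewrite !ffunE; case: eqP. Qed.

Lemma upd_id X i : upd X i (X i) = X.
Proof. by apply/ffunP => k; rewrite !ffunE; case: eqP => // ->. Qed.

Lemma agree_upd X i y : agree i X (upd X i y).
Proof. by apply/forallP => k; apply/implyP => Hk; rewrite upd_other. Qed.

Lemma agree_upd_id X Y i : agree i X Y -> upd X i (Y i) = Y.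
Proof.
move/forallP => H; apply/ffunP => k; rewrite ffunE; case: eqP => [->//|/eqP Hk].
by move: (H k); rewrite Hk => /eqP.
Qed.

Lemma RY (X : BB) (i : 'I_n) (F : BB -> R) :
  \sum_Y (agree i X Y)%:R * F Y = \sum_y F (upd X i y).
Proof.
rewrite (eq_bigr (fun Y => if agree i X Y then F Y else 0)); last first.
  by move=> Y _; case: agree; rewrite ?mul1r ?mul0r.
rewrite -big_mkcond /= (reindex_onto (fun y => upd X i y) (fun Y => Y i)).
  apply: eq_bigl => y; by rewrite agree_upd upd_same eqxx.
by move=> Y /agree_upd_id.
Qed.

Lemma RX (i : 'I_n) (x0 : bits m) (F : BB -> R) :
  \sum_X F X = \sum_(Rr : BB) (Rr i == x0)%:R * \sum_x F (upd Rr i x).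
Proof.
rewrite (@partition_big _ _ _ _ _ _ xpredT (fun X : BB => X i) xpredT) //=.
transitivity (\sum_x \sum_(Rr : BB | Rr i == x0) F (upd Rr i x)).
  apply: eq_bigr => x _.
  rewrite (reindex_onto (fun Rr => upd Rr i x) (fun X => upd X i x0)).
    apply: eq_bigl => Rr; rewrite upd_same eqxx /= upd_upd.
    apply/eqP/eqP => [<-|E]; first by rewrite upd_same.
    by rewrite -{2}(upd_id Rr i) E.
  by move=> X /eqP E; rewrite upd_upd -E upd_id.
rewrite exchange_big /=; rewrite big_mkcond /=; apply: eq_bigr => Rr _.
by case: eqP; rewrite ?mul1r ?mul0r.
Qed.
End Upd.

Section Star.
Variable R : realType.
Variables (n m : nat) (f : pfun n) (g : pfun m).
Notation BB := {ffun 'I_n -> bits m}.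

Definition aF (w : BB -> R) (z : bits n) : R := nrm (fun X => (FB g z X)%:R * w X).

Lemma lam_ge0 k (h : pfun k) : 0 <= lambda R h.
Proof. exact: SN_ge0. Qed.

Definition Cz (z : bits n) (i : 'I_n) (Rr : BB) :=
  [forall k, (k != i) ==> (g (Rr k) == Some (z k))].

Lemma FB_upd z Rr i x : FB g z (upd Rr i x) = Cz z i Rr && (g x == Some (z i)).
Proof.
apply/forallP/andP => [H|[/forallP H1 H2] k].
  split; last by move: (H i); rewrite upd_same.
  apply/forallP => k; apply/implyP => Hk; by move: (H k); rewrite upd_other.
have [->|Hk] := eqVneq k i; first by rewrite upd_same.
by rewrite upd_other //; move: (H1 k); rewrite Hk.
Qed.

Lemma sqn (x : R) : `|x| ^+ 2 = x ^+ 2.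
Proof. by rewrite -normrX ger0_norm ?sqr_ge0. Qed.

Lemma nat01 (b : bool) : 0 <= (b%:R : R).
Proof. by case: b; rewrite ?ler01 ?lexx. Qed.

Lemma star (w' w : BB -> R) (z z' : bits n) :
  Ahat R f z z' * (\sum_X \sum_Y (FB g z X)%:R * (FB g z' Y)%:R *
       (hamming1 (fromB X) (fromB Y))%:R * (w' X * w Y))
  <= Ahat R f z z' * (lambda R g * aF w' z * aF w z').
Proof.
rewrite /Ahat; case: ifP => Hc; last by rewrite !mul0r.
rewrite !mul1r.
have /cards1P [i Hi] : (#|[set k | z k != z' k]| == 1)%N.
  by rewrite -ham_fin; move: Hc => /andP[/andP[_ ->]].
have Hzi : z i != z' i by have := set11 i; rewrite -Hi inE.
have Hzk : forall k, k != i -> z' k = z k.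
  move=> k Hk; have : (k \in [set k | z k != z' k]) = (k \in [set i]) by rewrite Hi.
  by rewrite !inE (negbTE Hk) => /negbFE /eqP ->.
pose T X Y := (FB g z X)%:R * (FB g z' Y)%:R * (hamming1 (X i) (Y i))%:R *
   (`|w' X| * `|w Y|) : R.
have S1 : \sum_X \sum_Y (FB g z X)%:R * (FB g z' Y)%:R *
       (hamming1 (fromB X) (fromB Y))%:R * (w' X * w Y) <=
    \sum_X \sum_Y (agree i X Y)%:R * T X Y.
  apply: ler_sum => X _; apply: ler_sum => Y _.
  case FX: (FB g z X); last by rewrite /T FX !mul0r mulr0.
  case FY: (FB g z' Y); last by rewrite /T FY !mulr0 !mul0r mulr0.
  have Hne : X i != Y i.
    move/forallP: FX => /(_ i) /eqP E1; move/forallP: FY => /(_ i) /eqP E2.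
    by apply: (contraNneq _ Hzi) => E; move: E1; rewrite E E2 => -[->].
  rewrite /T FX FY (HB Hne); case: (agree i X Y) => /=; last by rewrite mulr0 !mul0r.
  rewrite !mul1r; case: (hamming1 (X i) (Y i)); last by rewrite !mul0r.
  by rewrite !mul1r -normrM ler_norm.
apply: le_trans S1 _.
under eq_bigr => X _ do rewrite RY.
pose x0 : bits m := [ffun => false].
rewrite (RX i x0 (fun X => \sum_y T X (upd X i y))).
have HC : forall Rr, Cz z' i Rr = Cz z i Rr.
  move=> Rr; apply: eq_forallb => k; have [Hk|Hk] := eqVneq k i => //=.
  by rewrite Hzk.
pose c (Rr : BB) : R := ((Rr i == x0) && Cz z i Rr)%:R.
pose u (Rr : BB) (x : bits m) : R := (g x == Some (z i))%:R * `|w' (upd Rr i x)|.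
pose v (Rr : BB) (y : bits m) : R := (g y == Some (z' i))%:R * `|w (upd Rr i y)|.
have E3 : forall Rr : BB, (Rr i == x0)%:R * \sum_x \sum_y T (upd Rr i x) (upd (upd Rr i x) i y)
    = c Rr * bil (Ahat R g) (u Rr) (v Rr).
  move=> Rr; rewrite /bil /app !big_distrr; apply: eq_bigr => x _.
  rewrite big_distrr /= mulrA big_distrr; apply: eq_bigr => y _.
  rewrite /T /c /u /v upd_upd !upd_same !FB_upd HC.
  case: (Rr i == x0); last by rewrite /= ?mulr0n ?mulr1n; ring.
  case: (Cz z i Rr); last by rewrite /= ?mulr0n ?mulr1n; ring.
  case Ex: (g x == Some (z i)); last by rewrite /= ?mulr0n ?mulr1n; ring.
  case Ey: (g y == Some (z' i)); last by rewrite /= ?mulr0n ?mulr1n; ring.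
  rewrite /Ahat /dom (eqP Ex) (eqP Ey) /=.
  have -> : (Some (z i) != Some (z' i)) = true by apply: (contraNneq _ Hzi) => -[->].
  rewrite andbT; case: (hamming1 x y) => /=; rewrite ?mulr0n ?mulr1n; ring.
rewrite (eq_bigr _ (fun Rr _ => E3 Rr)).
have c01 : forall Rr, c Rr * c Rr = c Rr by move=> Rr; rewrite /c; case: (_ && _); rewrite ?mulr0n ?mulr1n; ring.
have c0 : forall Rr, 0 <= c Rr by move=> Rr; exact: nat01.
have NU : forall (zz : bits n) (ww : BB -> R), (forall Rr, Cz zz i Rr = Cz z i Rr) ->
    nrm (fun Rr => c Rr * nrm (fun x => (g x == Some (zz i))%:R * `|ww (upd Rr i x)|))
    = aF ww zz.
  move=> zz ww HCz; rewrite /aF /nrm; congr Num.sqrt.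
  rewrite /ss (RX i x0 (fun X => ((FB g zz X)%:R * ww X) ^+ 2)).
  apply: eq_bigr => Rr _.
  rewrite exprMn sqr_sqrtr ?ss_ge0 // expr2 c01 /ss big_distrr big_distrr.
  apply: eq_bigr => x _; rewrite FB_upd HCz /c.
  case: (Rr i == x0); case: (Cz z i Rr); case: (g x == Some (zz i));
   rewrite /= ?mulr0n ?mulr1n ?mul1r ?sqn; ring.
have LE : \sum_Rr c Rr * bil (Ahat R g) (u Rr) (v Rr) <=
    \sum_Rr c Rr * (lambda R g * nrm (u Rr) * nrm (v Rr)).
  apply: ler_sum => Rr _; apply: ler_wpM2l; [exact: c0 | exact: lam_low].
apply: le_trans LE _.
rewrite -(NU z w') // -(NU z' w) //.
rewrite (eq_bigr (fun Rr => lambda R g * ((c Rr * nrm (u Rr)) * (c Rr * nrm (v Rr))))); last first.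
  by move=> Rr _; rewrite -{1}c01; ring.
rewrite -big_distrr -mulrA; apply: ler_wpM2l; first exact: lam_ge0.
exact: CS.
Qed.

Lemma dist2 (A B : finType) (a b : R) (F : A -> B -> R) :
  a * ((\sum_i \sum_j F i j) * b) = \sum_i \sum_j a * (F i j * b).
Proof.
rewrite big_distrl big_distrr; apply: eq_bigr => i _.
by rewrite big_distrl big_distrr.
Qed.

Lemma dist3 (A B C : finType) (a : R) (F : C -> A -> B -> R) (b : C -> R) :
  a * \sum_y ((\sum_i \sum_j F y i j) * b y) = \sum_y \sum_i \sum_j a * (F y i j * b y).
Proof. by rewrite big_distrr; apply: eq_bigr => y _; exact: dist2. Qed.

Lemma nrm_aF (w : BB -> R) : nrm (aF w) <= nrm w.
Proof.
rewrite ler_sqrt ?ss_ge0 // /ss.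
under eq_bigr => z _ do rewrite /aF sqr_sqrtr ?ss_ge0 // /ss.
rewrite exchange_big /=; apply: ler_sum => X _.
rewrite (eq_bigr (fun z => (z == zof g X)%:R * ((alldef g X)%:R * w X ^+ 2))); last first.
  by move=> z _; rewrite FB_alldef exprMn; case: (alldef g X); case: (z == zof g X);
    rewrite /= ?mulr0n ?mulr1n; ring.
rewrite sum_ind; case: (alldef g X); rewrite /= ?mulr0n ?mulr1n ?mul1r ?mul0r //.
exact: sqr_ge0.
Qed.

Lemma nrm_fromB (W : bits (n * m) -> R) : nrm (fun X : BB => W (fromB X)) = nrm W.
Proof. by rewrite /nrm /ss [in RHS]sumB. Qed.

Lemma upper : lambda R (compose f g) <= lambda R f * lambda R g.
Proof.
apply: lam_up; first by rewrite mulr_ge0 ?lam_ge0.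
move=> W' W.
pose w' X := W' (fromB X); pose w X := W (fromB X).
have EA : bil (Ahat R (compose f g)) W' W =
  \sum_z \sum_z' Ahat R f z z' * (\sum_X \sum_Y (FB g z X)%:R * (FB g z' Y)%:R *
       (hamming1 (fromB X) (fromB Y))%:R * (w' X * w Y)).
  rewrite /bil /app sumB.
  under eq_bigr => X _ do rewrite sumB.
  under eq_bigr => X _ do under eq_bigr => Y _ do rewrite U1.
  under eq_bigr => X _ do rewrite dist3.
  rewrite sum4; apply: eq_bigr => z _; apply: eq_bigr => z' _.
  rewrite mulr_sumr; apply: eq_bigr => X _; rewrite mulr_sumr; apply: eq_bigr => Y _.
  rewrite /w' /w; ring.
rewrite EA.
apply: le_trans (_ : _ <= \sum_z \sum_z' Ahat R f z z' * (lambda R g * aF w' z * aF w z')) _.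
  by apply: ler_sum => z _; apply: ler_sum => z' _; exact: star.
have -> : \sum_z \sum_z' Ahat R f z z' * (lambda R g * aF w' z * aF w z') =
   lambda R g * bil (Ahat R f) (aF w') (aF w).
  rewrite /bil /app mulr_sumr; apply: eq_bigr => z _; rewrite !mulr_sumr.
  by apply: eq_bigr => z' _; ring.
apply: le_trans (_ : _ <= lambda R g * (lambda R f * nrm (aF w') * nrm (aF w))) _.
  by apply: ler_wpM2l; [exact: lam_ge0 | exact: lam_low].
rewrite -(nrm_fromB W') -(nrm_fromB W) -/w' -/w.
have := nrm_aF w'; have := nrm_aF w; have := nrm_ge0 (aF w'); have := nrm_ge0 (aF w).
have := lam_ge0 f; have := lam_ge0 g.
move=> h1 h2 h3 h4 h5 h6.
have -> : lambda R g * (lambda R f * nrm (aF w') * nrm (aF w)) =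
  (lambda R g * lambda R f) * (nrm (aF w') * nrm (aF w)) by ring.
have -> : lambda R f * lambda R g * nrm w' * nrm w =
  (lambda R g * lambda R f) * (nrm w' * nrm w) by ring.
apply: ler_wpM2l; first exact: mulr_ge0.
exact: ler_pM.
Qed.
End Star.

Section Split.
Variable R : realType.
Variables (m : nat) (g : pfun m).

Lemma bilZ (V : finType) (A : V -> V -> R) a b u v :
  bil A (fun i => a * u i) (fun j => b * v j) = a * b * bil A u v.
Proof.
rewrite /bil /app mulr_sumr; apply: eq_bigr => i _.
have -> : \sum_j A i j * (b * v j) = b * \sum_j A i j * v j.
  by rewrite mulr_sumr; apply: eq_bigr => j _; ring.
ring.
Qed.

Lemma bil_sym (V : finType) (A : V -> V -> R) u v :
  (forall x y, A x y = A y x) -> bil A u v = bil A v u.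
Proof.
move=> HA; rewrite /bil /app.
under eq_bigr => i _ do rewrite mulr_sumr.
under [RHS]eq_bigr => i _ do rewrite mulr_sumr.
rewrite exchange_big /=; apply: eq_bigr => j _; apply: eq_bigr => i _.
rewrite HA; ring.
Qed.

Lemma ham_sym k (x y : bits k) : hamming1 x y = hamming1 y x.
Proof.
rewrite !ham_fin; suff -> : [set i | x i != y i] = [set i | y i != x i] by [].
apply/setP => i; by rewrite !inE eq_sym.
Qed.

Lemma Ahat_sym k (h : pfun k) x y : Ahat R h x y = Ahat R h y x.
Proof. by rewrite /Ahat ham_sym [h x == _]eq_sym [dom h x && _]andbC. Qed.

Lemma bil_scaled (c : R) : 0 <= c ->
  (forall u v : bits m -> R, (forall x, g x != Some false -> u x = 0) ->
     (forall x, g x != Some true -> v x = 0) -> ss u = 1 -> ss v = 1 ->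
     bil (Ahat R g) u v <= c) ->
  forall u v : bits m -> R, (forall x, g x != Some false -> u x = 0) ->
     (forall x, g x != Some true -> v x = 0) ->
     bil (Ahat R g) u v <= c * nrm u * nrm v.
Proof.
move=> c0 H u v Hu Hv.
have [Nu|Nu] := eqVneq (nrm u) 0.
  have := nrm_eq0 Nu => u0; rewrite Nu mulr0 mul0r /bil big1 // => i _.
  by rewrite u0 mul0r.
have [Nv|Nv] := eqVneq (nrm v) 0.
  have := nrm_eq0 Nv => v0; rewrite Nv mulr0 /bil big1 // => i _.
  by rewrite /app big1 ?mulr0 // => j _; rewrite v0 mulr0.
have pu : 0 < nrm u by rewrite lt_def Nu nrm_ge0.
have pv : 0 < nrm v by rewrite lt_def Nv nrm_ge0.
have N1 : forall w : bits m -> R, 0 < nrm w -> ss (fun i => (nrm w)^-1 * w i) = 1.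
  move=> w pw; rewrite -[ss _]sqr_sqrtr ?ss_ge0 // -/(nrm _) nrmZ ger0_norm.
    by rewrite mulVf ?expr1n // gt_eqF.
  by rewrite invr_ge0 ltW.
have Hu' : forall x, g x != Some false -> (nrm u)^-1 * u x = 0.
  by move=> x /Hu ->; rewrite mulr0.
have Hv' : forall x, g x != Some true -> (nrm v)^-1 * v x = 0.
  by move=> x /Hv ->; rewrite mulr0.
have Hc := H _ _ Hu' Hv' (N1 u pu) (N1 v pv).
have E : bil (Ahat R g) u v = (nrm u * nrm v) *
   bil (Ahat R g) (fun i => (nrm u)^-1 * u i) (fun j => (nrm v)^-1 * v j).
  by rewrite bilZ; field; rewrite Nu Nv.
rewrite E (_ : c * nrm u * nrm v = (nrm u * nrm v) * c); last by ring.
by apply: ler_wpM2l => //; rewrite mulr_ge0 ?nrm_ge0.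
Qed.

Definition Pr (b : bool) (W : bits m -> R) x : R := (g x == Some b)%:R * W x.

Lemma Pr_supp b W x : g x != Some b -> Pr b W x = 0.
Proof. by rewrite /Pr => /negbTE ->; rewrite mul0r. Qed.

Lemma ss_Pr W : ss (Pr false W) + ss (Pr true W) <= ss W.
Proof.
rewrite /ss -big_split; apply: ler_sum => x _; rewrite /Pr.
case: (g x) => [[]|] /=; rewrite ?mulr0n ?mulr1n ?mul0r ?mul1r ?expr0n ?addr0 ?add0r //=.
by rewrite sqr_ge0.
Qed.

Lemma lam_split_up (c : R) : 0 <= c ->
  (forall u v : bits m -> R, (forall x, g x != Some false -> u x = 0) ->
     (forall x, g x != Some true -> v x = 0) -> ss u = 1 -> ss v = 1 ->
     bil (Ahat R g) u v <= c) ->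
  lambda R g <= c.
Proof.
move=> c0 H; apply: lam_up => // W U.
have E : bil (Ahat R g) W U = bil (Ahat R g) (Pr false W) (Pr true U) +
    bil (Ahat R g) (Pr false U) (Pr true W).
  rewrite [bil _ (Pr false U) _]bil_sym; last by move=> x y; exact: Ahat_sym.
  rewrite /bil /app -big_split; apply: eq_bigr => x _.
  rewrite !mulr_sumr -big_split; apply: eq_bigr => y _.
  rewrite /Pr /Ahat /dom; case: (g x) => [[]|]; case: (g y) => [[]|];
    case: (hamming1 x y); rewrite /= ?mulr0n ?mulr1n; ring.
rewrite E.
have B1 := bil_scaled c0 H (@Pr_supp false W) (@Pr_supp true U).
have B2 := bil_scaled c0 H (@Pr_supp false U) (@Pr_supp true W).
apply: le_trans (lerD B1 B2) _.
set a := nrm (Pr false W); set q := nrm (Pr true U).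
set p := nrm (Pr false U); set b := nrm (Pr true W).
have -> : c * a * q + c * p * b = c * (a * q + p * b) by ring.
rewrite -mulrA; apply: ler_wpM2l => //.
have SW := ss_Pr W; have SU := ss_Pr U.
have Ea : a ^+ 2 = ss (Pr false W) by rewrite sqr_sqrtr ?ss_ge0.
have Eb : b ^+ 2 = ss (Pr true W) by rewrite sqr_sqrtr ?ss_ge0.
have Ep : p ^+ 2 = ss (Pr false U) by rewrite sqr_sqrtr ?ss_ge0.
have Eq : q ^+ 2 = ss (Pr true U) by rewrite sqr_sqrtr ?ss_ge0.
have a0 : 0 <= a by exact: nrm_ge0.
have b0 : 0 <= b by exact: nrm_ge0.
have p0 : 0 <= p by exact: nrm_ge0.
have q0 : 0 <= q by exact: nrm_ge0.
have X0 : 0 <= a * q + p * b by rewrite addr_ge0 ?mulr_ge0.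
have -> : nrm W * nrm U = Num.sqrt (ss W * ss U) by rewrite -sqrtrM ?ss_ge0.
rewrite -[a * q + p * b]ger0_norm // -sqrtr_sqr ler_sqrt;
  last by rewrite mulr_ge0 ?ss_ge0.
apply: (@le_trans _ _ ((a ^+ 2 + b ^+ 2) * (p ^+ 2 + q ^+ 2))).
  have : 0 <= (a * p - b * q) ^+ 2 by exact: sqr_ge0.
  lra.
rewrite Ea Eb Ep Eq; apply: ler_pM; rewrite ?addr_ge0 ?ss_ge0 //.
Qed.
End Split.

Section Prod.
Variable R : realType.
Variables (n m : nat) (f : pfun n) (g : pfun m).
Notation BB := {ffun 'I_n -> bits m}.
Variables (u v : bits m -> R).
Hypothesis Hu : forall x, g x != Some false -> u x = 0.
Hypothesis Hv : forall x, g x != Some true -> v x = 0.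
Hypothesis Su : ss u = 1.
Hypothesis Sv : ss v = 1.

Definition phi (b : bool) : bits m -> R := if b then v else u.
Definition Tz (z : bits n) (X : BB) : R := \prod_i phi (z i) (X i).

Lemma phi_supp b x : g x != Some b -> phi b x = 0.
Proof. by case: b => /=; [exact: Hv | exact: Hu]. Qed.

Lemma ss_phi b : ss (phi b) = 1.
Proof. by case: b. Qed.

Lemma T1 z X : ~~ FB g z X -> Tz z X = 0.
Proof.
rewrite /FB negb_forall => /existsP [i Hi].
by rewrite /Tz (bigD1 i) //= phi_supp // mul0r.
Qed.

Lemma T2 z z' X : z != z' -> Tz z X * Tz z' X = 0.
Proof.
move=> Hz; case Fz: (FB g z X); last by rewrite T1 ?Fz // mul0r.
case Fz': (FB g z' X); last by rewrite (T1 (z := z')) ?Fz' // mulr0.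
move: Fz Fz'; rewrite !FB_alldef => /andP[_ /eqP E1] /andP[_ /eqP E2].
by rewrite E1 E2 eqxx in Hz.
Qed.

Lemma T3 z : \sum_X Tz z X ^+ 2 = 1.
Proof.
rewrite /Tz.
have -> : \sum_(X : BB) (\prod_i phi (z i) (X i)) ^+ 2 =
    \sum_(X : BB) \prod_i (phi (z i) (X i)) ^+ 2.
  apply: eq_bigr => X _; rewrite expr2 -big_split /=.
  by apply: eq_bigr => i _; rewrite expr2.
rewrite -(bigA_distr_bigA (fun i y => phi (z i) y ^+ 2)) /=.
by rewrite big1 // => i _; exact: ss_phi.
Qed.

Lemma sq_sum_orth (I : finType) (t : I -> R) :
  (forall a b, a != b -> t a * t b = 0) -> (\sum_a t a) ^+ 2 = \sum_a t a ^+ 2.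
Proof.
move=> H; rewrite expr2 big_distrl /=; apply: eq_bigr => a _.
rewrite big_distrr /= (bigD1 a) //= big1 ?addr0 ?expr2 // => b Hb.
by apply: H; rewrite eq_sym.
Qed.

Definition Pv (a : bits n -> R) (x : bits (n * m)) : R :=
  \sum_z a z * Tz z (toB x).

Lemma ss_Pv a : ss (Pv a) = ss a.
Proof.
rewrite /ss sumB.
have Horth : forall (X : BB) z z', z != z' -> (a z * Tz z X) * (a z' * Tz z' X) = 0.
  by move=> X z z' Hz; rewrite mulrACA T2 // mulr0.
under eq_bigr => X _ do rewrite /Pv fromBK (sq_sum_orth (Horth X)).
rewrite exchange_big /=; apply: eq_bigr => z _.
under eq_bigr => X _ do rewrite exprMn.
by rewrite -mulr_sumr T3 mulr1.
Qed.

Lemma Tpair z z' X Y :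
  Tz z X * Ahat R (compose f g) (fromB X) (fromB Y) * Tz z' Y =
  Tz z X * (Ahat R f z z' * (hamming1 (fromB X) (fromB Y))%:R) * Tz z' Y.
Proof.
case Fz: (FB g z X); last by rewrite T1 ?Fz // !mul0r.
case Fz': (FB g z' Y); last by rewrite (T1 (z := z')) ?Fz' // !mulr0.
move: Fz Fz'; rewrite !FB_alldef => /andP[HX /eqP ->] /andP[HY /eqP ->].
by rewrite Ahat_comp.
Qed.

Lemma Hpt x y : u x * (hamming1 x y)%:R * v y = u x * (Ahat R g x y * v y).
Proof.
have [Hx|Hx] := eqVneq (g x) (Some false); last by rewrite Hu // !mul0r.
have [Hy|Hy] := eqVneq (g y) (Some true); last by rewrite Hv // !mulr0.
by rewrite /Ahat /dom Hx Hy /= andbT; case: (hamming1 x y); rewrite /= ?mulr0n ?mulr1n; ring.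
Qed.

Lemma Qlem z z' :
  Ahat R f z z' * (\sum_X \sum_Y Tz z X * (hamming1 (fromB X) (fromB Y))%:R * Tz z' Y)
  = Ahat R f z z' * bil (Ahat R g) u v.
Proof.
rewrite [Ahat R f z z']/Ahat; case: ifP => Hc; last by rewrite !mul0r.
rewrite !mul1r.
have /cards1P [i Hi] : (#|[set k | z k != z' k]| == 1)%N.
  by rewrite -ham_fin; move: Hc => /andP[/andP[_ ->]].
have Hzi : z i != z' i by have := set11 i; rewrite -Hi inE.
have Hzk : forall k, k != i -> z' k = z k.
  move=> k Hk; have : (k \in [set k | z k != z' k]) = (k \in [set i]) by rewrite Hi.
  by rewrite !inE (negbTE Hk) => /negbFE /eqP ->.
have S1 : forall X Y, Tz z X * (hamming1 (fromB X) (fromB Y))%:R * Tz z' Y =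
    (agree i X Y)%:R * (Tz z X * (hamming1 (X i) (Y i))%:R * Tz z' Y).
  move=> X Y.
  case FX: (FB g z X); last by rewrite T1 ?FX // !mul0r mulr0.
  case FY: (FB g z' Y); last by rewrite (T1 (z := z')) ?FY // !mulr0.
  have Hne : X i != Y i.
    move/forallP: FX => /(_ i) /eqP E1; move/forallP: FY => /(_ i) /eqP E2.
    by apply: (contraNneq _ Hzi) => E; move: E1; rewrite E E2 => -[->].
  rewrite (HB Hne); case: (agree i X Y); case: (hamming1 (X i) (Y i));
    rewrite /= ?mulr0n ?mulr1n; ring.
under eq_bigr => X _ do under eq_bigr => Y _ do rewrite S1.
under eq_bigr => X _ do rewrite RY.
rewrite exchange_big /=.
pose G (y : bits m) (k : 'I_n) (x : bits m) : R :=
  if k == i then phi (z i) x * (hamming1 x y)%:R * phi (z' i) y else phi (z k) x ^+ 2.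
have S2 : forall y X, Tz z X * (hamming1 (X i) (upd X i y i))%:R * Tz z' (upd X i y) =
    \prod_k G y k (X k).
  move=> y X; rewrite upd_same /Tz (bigD1 i) //= [in RHS](bigD1 i) //=.
  rewrite [X in _ * _ * X](bigD1 i) //= upd_same /G eqxx.
  have -> : \prod_(k | k != i) phi (z' k) (upd X i y k) = \prod_(k | k != i) phi (z k) (X k).
    by apply: eq_bigr => k Hk; rewrite Hzk // upd_other.
  have -> : \prod_(k | k != i) (if k == i then phi (z i) (X k) * (hamming1 (X k) y)%:R *
       phi (z' i) y else phi (z k) (X k) ^+ 2) = \prod_(k | k != i) phi (z k) (X k) *
       \prod_(k | k != i) phi (z k) (X k).
    rewrite -big_split /=; apply: eq_bigr => k Hk; by rewrite (negbTE Hk) expr2.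
  ring.
under eq_bigr => y _ do under eq_bigr => X _ do rewrite S2.
under eq_bigr => y _ do rewrite -(bigA_distr_bigA (G y)) /= (bigD1 i) //=.
have S3 : forall y, \prod_(k | k != i) \sum_x G y k x = 1.
  move=> y; rewrite big1 // => k Hk; rewrite /G (negbTE Hk); exact: ss_phi.
under eq_bigr => y _ do rewrite S3 mulr1 /G eqxx.
rewrite /bil /app; under [RHS]eq_bigr => x _ do rewrite mulr_sumr.
move: Hzi; case: (z i); case: (z' i) => //= _.
  apply: eq_bigr => y _; apply: eq_bigr => x _.
  by rewrite -Hpt ham_sym; ring.
rewrite exchange_big /=; apply: eq_bigr => x _; apply: eq_bigr => y _.
by rewrite -Hpt.
Qed.

Lemma claimB a' a : bil (Ahat R (compose f g)) (Pv a') (Pv a) =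
  bil (Ahat R g) u v * bil (Ahat R f) a' a.
Proof.
rewrite /bil /app sumB.
under eq_bigr => X _ do rewrite sumB.
have S1 : forall X Y, Pv a' (fromB X) * (Ahat R (compose f g) (fromB X) (fromB Y) * Pv a (fromB Y))
   = \sum_z \sum_z' a' z * a z' * (Tz z X * (Ahat R f z z' * (hamming1 (fromB X) (fromB Y))%:R) * Tz z' Y).
  move=> X Y; rewrite /Pv !fromBK mulr_suml; apply: eq_bigr => z _.
  rewrite mulr_sumr mulr_sumr; apply: eq_bigr => z' _.
  rewrite -Tpair; ring.
under eq_bigr => X _ do rewrite mulr_sumr.
under eq_bigr => X _ do under eq_bigr => Y _ do rewrite S1.
rewrite sum4.
rewrite mulr_sumr; apply: eq_bigr => z _.
rewrite mulr_sumr mulr_sumr; apply: eq_bigr => z' _.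
have -> : \sum_X \sum_Y a' z * a z' * (Tz z X * (Ahat R f z z' *
     (hamming1 (fromB X) (fromB Y))%:R) * Tz z' Y) =
   a' z * a z' * (Ahat R f z z' * (\sum_X \sum_Y Tz z X * (hamming1 (fromB X) (fromB Y))%:R * Tz z' Y)).
  rewrite mulr_sumr mulr_sumr; apply: eq_bigr => X _.
  rewrite mulr_sumr mulr_sumr; apply: eq_bigr => Y _; ring.
rewrite Qlem /bil /app; ring.
Qed.
End Prod.

Lemma lower (R : realType) (n m : nat) (f : pfun n) (g : pfun m) :
  lambda R f * lambda R g <= lambda R (compose f g).
Proof.
have L0 : 0 <= lambda R (compose f g) by exact: lam_ge0.
have Lf0 : 0 <= lambda R f by exact: lam_ge0.
move: Lf0; rewrite le_eqVlt => /predU1P [<-|Lf]; first by rewrite mul0r.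
rewrite mulrC -ler_pdivlMr //.
apply: lam_split_up; first by rewrite divr_ge0 // ltW.
move=> u v Hu Hv Su Sv.
rewrite ler_pdivlMr //.
set s := bil (Ahat R g) u v.
have [Hs|Hs] := lerP s 0.
  by apply: le_trans L0; rewrite mulr_le0_ge0 // ltW.
rewrite mulrC -ler_pdivlMr //.
apply: lam_up; first by rewrite divr_ge0 // ltW.
move=> a' a.
have B := claimB f Hu Hv Su Sv a' a.
have := lam_low (compose f g) (Pv u v a') (Pv u v a).
rewrite B /nrm (ss_Pv Hu Hv Su Sv) (ss_Pv Hu Hv Su Sv) -/(nrm a') -/(nrm a) -/s.
move=> H.
have -> : lambda R (compose f g) / s * nrm a' * nrm a =
  (lambda R (compose f g) * nrm a' * nrm a) / s by ring.
by rewrite ler_pdivlMr // mulrC.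
Qed.

Unset Implicit Arguments.
Theorem theoremA2 (R : realType) (n m : nat) (f : pfun n) (g : pfun m) :
  lambda R (compose f g) = lambda R f * lambda R g.
Proof. by apply/eqP; rewrite eq_le upper lower. Qed.
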